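(* Let $S=[S_1,\ldots,S_m]$ be a sequence of propositional formulae and let $S_i$ be one of its formulae. Then $S \cdot [S_i] \equiv S$ and $S \cdot [\neg S_i] \equiv S$.
   Context: Models are truth assignments. For a formula $G$: $I \leq_G J$ iff $I \models G$ or $J \not\models G$. For a sequence $S=[S_1,\ldots,S_m]$: $I \leq_S J$ iff either $S=[]$, or ($I \leq_{S_1} J$ and (either $J \not\leq_{S_1} I$ or $I \leq_R J$)), where $R=[S_2,\ldots,S_m]$. For sequences, $S\equiv R$ means $I \leq_S J$ and $I\leq_R J$ coincide for all pairs of models $I,J$. $S\cdot R$ denotes concatenation of sequences. *)

(* Defs.v *)
From Stdlib Require Import List.
Import ListNotations.

Inductive form : Type :=
| FVar : nat -> form
| FTrue : form
| FFalse : form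
| FNot : form -> form
| FAnd : form -> form -> form
| FOr : form -> form -> form
| FImp : form -> form -> form.

Definition model := nat -> bool.

Fixpoint sat (I : model) (G : form) : Prop :=
  match G with
  | FVar n => I n = true
  | FTrue => True
  | FFalse => False
  | FNot A => ~ sat I A
  | FAnd A B => sat I A /\ sat I B
  | FOr A B => sat I A \/ sat I B
  | FImp A B => sat I A -> sat I B
  end.

Definition le_form (G : form) (I J : model) : Prop :=
  sat I G \/ ~ sat J G.

Fixpoint le_seq (S : list form) (I J : model) : Prop :=
  match S with
  | [] => True
  | S1 :: R =>
      le_form S1 I J /\ (~ le_form S1 J I \/ le_seq R I J)
  end.

Definition seq_equiv (S R : list form) : Prop :=
  forall I J : model, le_seq S I J <-> le_seq R I J.

(* Main.v *)
Require Import Defs.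
From Stdlib Require Import List Classical.
Import ListNotations.

Lemma lemM (Si : form) (T : list form)
  (P : forall I J, (sat I Si <-> sat J Si) -> le_seq T I J) :
  forall S I J, (sat I Si <-> sat J Si) -> (le_seq (S ++ T) I J <-> le_seq S I J).
Proof.
  induction S as [|A S IH]; intros I J H; simpl.
  - split; auto.
  - rewrite (IH I J H). tauto.
Qed.

Lemma lemN (Si : form) (T : list form)
  (P : forall I J, (sat I Si <-> sat J Si) -> le_seq T I J) :
  forall S I J, In Si S -> (le_seq (S ++ T) I J <-> le_seq S I J).
Proof.
  induction S as [|A S IH]; intros I J Hin; simpl in *.
  - contradiction.
  - destruct Hin as [<- | Hin].
    + unfold le_form.
      destruct (classic (sat I A)), (classic (sat J A)).
      * rewrite (lemM A T P S I J) by tauto. tauto.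
      * tauto.
      * tauto.
      * rewrite (lemM A T P S I J) by tauto. tauto.
    + rewrite (IH I J Hin). tauto.
Qed.

Theorem theorem8 (S : list form) (Si : form) :
  In Si S ->
  seq_equiv (S ++ [Si]) S /\ seq_equiv (S ++ [FNot Si]) S.
Proof.
  intros Hin; split; intros I J; apply (lemN Si); auto;
  intros I' J' H; simpl; unfold le_form; simpl;
  destruct (classic (sat I' Si)); tauto.
Qed.
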